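(* Let $K$, $\alpha$, $E$ and $\varepsilon$ be as in the context, and suppose $\delta(K,\varepsilon)(E)<1/\alpha$. Let $g,h:(0,\infty)\to\mathbb{R}$ be non-decreasing functions with $g(r)\le h(r)$ for all $r\in(0,\infty)\setminus E$. Put $\alpha(r)=1+\varepsilon(r)$. Then there exists $R\ge1$ such that $g(r)\le h(\alpha(r)r)$ for all $r\ge R$.
   Context: $K:(0,\infty)\to(0,\infty)$ is one of: (1) $K\equiv1$; (2) $K(x)=x$; (3) a strictly increasing, continuous, concave function with $1\le K(x)\le x$ for $x\ge1$ satisfying $K(2x)\le\alpha K(x)$ for all $x\ge R_0$, for some constants $\alpha\in(1,2]$, $R_0\ge1$. In case (1) take $\alpha=1$, in case (2) take $\alpha=2$ (so in all cases $K(2x)\le\alpha K(x)$ for large $x$). $E\subset[1,\infty)$ is a measurable set with $\int_E\frac{dx}{K(x)}<\infty$, and $\varepsilon:(0,\infty)\to(0,1]$ is a function. The $K$-density of $E$ relative to $\varepsilon$ is $$\delta(K,\varepsilon)(E)=\limsup_{r\to\infty}\frac{\frac{K(r)}{r}\int_{E\cap[r,\infty)}\frac{dx}{K(x)}}{\varepsilon(r)}.$$ *)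

(* Defs.v *)
From Stdlib Require Import Reals Lra ClassicalEpsilon.
Open Scope R_scope.

(** Countable covers of a set A ⊆ R by closed intervals [a n, b n], with a
    per-interval cost relation [cost a b v] ("the interval [a,b] costs v"),
    and total cost s = Σ_n c n. *)
Definition cover_sums (cost : R -> R -> R -> Prop) (A : R -> Prop) (s : R) : Prop :=
  exists a b c : nat -> R,
    (forall n, a n <= b n) /\
    (forall n, cost (a n) (b n) (c n)) /\
    (forall x, A x -> exists n, a n <= x <= b n) /\
    infinite_sum c s.

(** [outer_le cost A v] : the outer measure induced by [cost] of A is <= v
    (i.e. the infimum of the cover sums is <= v; false if it is +oo). *)
Definition outer_le (cost : R -> R -> R -> Prop) (A : R -> Prop) (v : R) : Prop :=
  forall e, 0 < e -> exists s, cover_sums cost A s /\ s <= v + e.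

Definition len_cost (a b v : R) : Prop := v = b - a.

(** Lebesgue measurability (Caratheodory criterion w.r.t. Lebesgue outer
    measure mstar):  mstar(A ∩ E) + mstar(A \ E) <= mstar(A) for all A ⊆ R. *)
Definition lebesgue_measurable (E : R -> Prop) : Prop :=
  forall (A : R -> Prop) (v : R), outer_le len_cost A v ->
    exists v1 v2, outer_le len_cost (fun x => A x /\ E x) v1 /\
                  outer_le len_cost (fun x => A x /\ ~ E x) v2 /\ v1 + v2 <= v.

(** Cost of [a,b] for the measure dx/K(x) (on (0,oo)): Riemann integral of 1/K. *)
Definition wcost (K : R -> R) (a b v : R) : Prop :=
  0 < a /\ exists pr : Riemann_integrable (fun x => / K x) a b, RiemannInt pr = v.

Definition wint_finite (K : R -> R) (A : R -> Prop) : Prop :=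
  exists v, outer_le (wcost K) A v.

(** ∫_A dx/K(x) (value; meaningful when finite): the infimum of cover sums. *)
Definition wint (K : R -> R) (A : R -> Prop) : R :=
  epsilon (inhabits 0)
    (fun v => outer_le (wcost K) A v /\ forall w, outer_le (wcost K) A w -> v <= w).

Definition K_admissible (K : R -> R) (alpha : R) : Prop :=
  (forall x, 0 < x -> 0 < K x) /\
  ( ((forall x, 0 < x -> K x = 1) /\ alpha = 1)
  \/ ((forall x, 0 < x -> K x = x) /\ alpha = 2)
  \/ ( (forall x y, 0 < x -> x < y -> K x < K y)
     /\ (forall x, 0 < x -> continuity_pt K x)
     /\ (forall x y t, 0 < x -> 0 < y -> 0 <= t <= 1 ->
           t * K x + (1 - t) * K y <= K (t * x + (1 - t) * y))
     /\ (forall x, 1 <= x -> 1 <= K x <= x)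
     /\ 1 < alpha <= 2
     /\ (exists R0, 1 <= R0 /\ forall x, R0 <= x -> K (2 * x) <= alpha * K x))).

Definition density_quot (K eps : R -> R) (E : R -> Prop) (r : R) : R :=
  (K r / r) * wint K (fun x => E x /\ r <= x) / eps r.

Definition limsup_infty_lt (F : R -> R) (L : R) : Prop :=
  exists c, c < L /\ exists R0, forall r, R0 <= r -> F r <= c.

Definition K_density_lt (K eps : R -> R) (E : R -> Prop) (L : R) : Prop :=
  limsup_infty_lt (density_quot K eps E) L.

(* Main.v *)
Require Import Defs.
From Stdlib Require Import Reals Lra Lia List Classical ClassicalEpsilon.
Open Scope R_scope.

Definition lsum (F : nat -> R) (l : list nat) : R :=
  fold_right (fun n acc => F n + acc) 0 l.

Lemma lsum_app F l1 l2 : lsum F (l1 ++ l2) = lsum F l1 + lsum F l2.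
Proof. induction l1; simpl; [ring| rewrite IHl1; ring]. Qed.

Lemma lsum_seqS F N : lsum F (seq 0 (S N)) = lsum F (seq 0 N) + F N.
Proof. rewrite seq_S, lsum_app. simpl. ring. Qed.

Lemma lsum_le F G l : (forall n, In n l -> F n <= G n) -> lsum F l <= lsum G l.
Proof.
  induction l; simpl; intros H. lra.
  pose proof (H a (or_introl eq_refl)).
  assert (lsum F l <= lsum G l) by (apply IHl; auto). lra.
Qed.

Lemma lsum_nonneg F l : (forall n, 0 <= F n) -> 0 <= lsum F l.
Proof. induction l; simpl; intros H; [lra|]. specialize (IHl H). specialize (H a). lra. Qed.

Lemma lsum_plus F G l : lsum (fun n => F n + G n) l = lsum F l + lsum G l.
Proof. induction l; simpl; [ring| rewrite IHl; ring]. Qed.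

Lemma lsum_scal c F l : lsum (fun n => c * F n) l = c * lsum F l.
Proof. induction l; simpl; [ring| rewrite IHl; ring]. Qed.

Lemma sum_f_lsum c N : sum_f_R0 c N = lsum c (seq 0 (S N)).
Proof.
  induction N. simpl. ring.
  rewrite lsum_seqS, <- IHN. simpl. reflexivity.
Qed.

Lemma geom N : lsum (fun n => / 2 ^ (S n)) (seq 0 N) = 1 - / 2 ^ N.
Proof.
  induction N. simpl. rewrite Rinv_1; ring.
  rewrite lsum_seqS, IHN. assert (2 ^ N <> 0) by (apply pow_nonzero; lra).
  simpl. field. auto.
Qed.

Lemma fin_cover (u v : nat -> R) : forall len l x y, length l = len -> x <= y ->
  (forall t, x <= t <= y -> exists n, In n l /\ u n < t < v n) ->
  y - x <= lsum (fun n => Rmax 0 (v n - u n)) l.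
Proof.
  intros len. induction len as [len IH] using (well_founded_induction Wf_nat.lt_wf).
  intros l x y Hlen Hxy Hcov.
  destruct (Hcov y (conj Hxy (Rle_refl y))) as [k [Hk [Hu Hv]]].
  destruct (in_split k l Hk) as [l1 [l2 ->]].
  rewrite lsum_app. simpl.
  set (F := fun n => Rmax 0 (v n - u n)).
  assert (HFk : v k - u k <= F k) by apply Rmax_r.
  assert (HF0 : forall n, 0 <= F n) by (intro; apply Rmax_l).
  pose proof (lsum_nonneg F l1 HF0). pose proof (lsum_nonneg F l2 HF0).
  destruct (Rle_dec x (u k)).
  - assert (Hih : u k - x <= lsum F (l1 ++ l2)).
    { apply (IH (length (l1 ++ l2))).
      - rewrite <- Hlen, !length_app; simpl; lia.
      - reflexivity.
      - lra.
      - intros t Ht. destruct (Hcov t) as [n [Hn Hnt]]; [lra|].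
        exists n; split; [|auto]. apply in_app_or in Hn; apply in_or_app.
        destruct Hn as [Hn|[Hn|Hn]]; auto. subst n. lra. }
    rewrite lsum_app in Hih. change (Rmax 0 (v k - u k)) with (F k). lra.
  - change (Rmax 0 (v k - u k)) with (F k). lra.
Qed.

Lemma hb (u v : nat -> R) r r' : r <= r' ->
  (forall t, r <= t <= r' -> exists n, u n < t < v n) ->
  exists N, forall t, r <= t <= r' -> exists n, (n < N)%nat /\ u n < t < v n.
Proof.
  intros Hrr Hcov.
  set (Q := fun x => exists N, forall t, r <= t <= x -> exists n, (n<N)%nat /\ u n < t < v n).
  set (St := fun x => r <= x <= r' /\ Q x).
  assert (HS0 : St r).
  { split; [lra|]. destruct (Hcov r) as [k Hk]; [lra|]. exists (Datatypes.S k).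
    intros t Ht. assert (t = r) by lra. subst. exists k; split; [lia|auto]. }
  destruct (completeness St) as [m [Hub Hleast]].
  { exists r'; intros x [Hx _]; lra. }
  { exists r; auto. }
  assert (Hrm : r <= m) by (apply Hub; auto).
  assert (Hmr : m <= r') by (apply Hleast; intros x [Hx _]; lra).
  destruct (Hcov m) as [k [Hku Hkv]]; [lra|].
  assert (Hext : forall y, r <= y <= r' -> y < v k -> Q y).
  { intros y Hy Hyv.
    assert (exists x, St x /\ u k < x) as [x [[Hx [N HN]] Hxu]].
    { apply NNPP; intro Hn. assert (m <= u k).
      { apply Hleast. intros x Hx. apply Rnot_lt_le. intro. apply Hn. exists x; auto. }
      lra. }
    exists (Nat.max N (Datatypes.S k)). intros t Ht. destruct (Rle_dec t x).
    - destruct (HN t) as [n [Hn Hnt]]; [lra|]. exists n; split; [lia|auto].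
    - exists k; split; [lia|lra]. }
  destruct (Rle_dec r' m).
  - apply (Hext r'); lra.
  - exfalso. set (y := Rmin r' ((m + v k)/2)).
    assert (Hy1 : y <= r') by apply Rmin_l.
    assert (Hy2 : y <= (m + v k)/2) by apply Rmin_r.
    assert (Hy3 : m < y) by (apply Rmin_glb_lt; lra).
    assert (St y) by (split; [lra| apply Hext; lra]).
    pose proof (Hub y H). lra.
Qed.

Lemma RI_lower f x y (pr : Riemann_integrable f x y) m : x <= y ->
  (forall t, x < t < y -> m <= f t) -> m * (y - x) <= RiemannInt pr.
Proof.
  intros. rewrite <- (RiemannInt_P15 (RiemannInt_P14 x y m)).
  apply RiemannInt_P19; auto.
Qed.

Lemma cost_bound (K : R -> R) (Kpos : forall x, 0 < x -> 0 < K x)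
  (Kmono : forall x y, 0 < x -> x <= y -> K x <= K y) r r' a b c :
  0 < r -> r <= r' -> a <= b -> wcost K a b c ->
  0 <= c /\ Rmax 0 (Rmin b r' - Rmax a r) / K r' <= c.
Proof.
  intros Hr Hrr Hab [Ha [pr <-]].
  assert (Hnn : forall x y (p : Riemann_integrable (fun t => / K t) x y),
             0 < x -> x <= y -> 0 <= RiemannInt p).
  { intros x y p hx hxy. rewrite <- (Rmult_0_l (y - x)). apply RI_lower; auto.
    intros t Ht. left. apply Rinv_0_lt_compat, Kpos. lra. }
  split. apply Hnn; auto.
  set (p := Rmax a r). set (q := Rmin b r').
  assert (Hap : a <= p) by apply Rmax_l.
  assert (Hrp : r <= p) by apply Rmax_r.
  assert (Hqb : q <= b) by apply Rmin_l.
  assert (Hqr : q <= r') by apply Rmin_r.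
  assert (HK' : 0 < K r') by (apply Kpos; lra).
  destruct (Rle_dec p q).
  - pose (pr1 := RiemannInt_P22 pr (conj Hap (Rle_trans _ _ _ r0 Hqb))).
    pose (pr2 := RiemannInt_P23 pr (conj Hap (Rle_trans _ _ _ r0 Hqb))).
    pose (pr3 := RiemannInt_P22 pr2 (conj r0 Hqb)).
    pose (pr4 := RiemannInt_P23 pr2 (conj r0 Hqb)).
    pose proof (RiemannInt_P26 pr1 pr2 pr) as E1.
    pose proof (RiemannInt_P26 pr3 pr4 pr2) as E2.
    pose proof (Hnn _ _ pr1 Ha Hap).
    pose proof (Hnn _ _ pr4 ltac:(lra) Hqb).
    assert (/ K r' * (q - p) <= RiemannInt pr3).
    { apply RI_lower; auto. intros t Ht. apply Rinv_le_contravar.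
      apply Kpos; lra. apply Kmono; lra. }
    rewrite Rmax_right by lra. unfold Rdiv. rewrite Rmult_comm. lra.
  - rewrite Rmax_left by lra. unfold Rdiv. rewrite Rmult_0_l. apply Hnn; auto.
Qed.

Lemma rmax_shift m e : 0 <= e -> Rmax 0 (m + e) <= Rmax 0 m + e.
Proof. intros. unfold Rmax. destruct (Rle_dec 0 (m+e)); destruct (Rle_dec 0 m); lra. Qed.

Lemma sum_mono (c : nat -> R) : (forall n, 0 <= c n) ->
  forall N k, sum_f_R0 c N <= sum_f_R0 c (N + k).
Proof.
  intros Hc N k. induction k. rewrite Nat.add_0_r; lra.
  rewrite Nat.add_succ_r. simpl. specialize (Hc (Datatypes.S (N + k))). lra.
Qed.

Lemma cover_lb (K : R -> R) (Kpos : forall x, 0 < x -> 0 < K x)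
  (Kmono : forall x y, 0 < x -> x <= y -> K x <= K y) (A : R -> Prop) r r' s :
  0 < r -> r <= r' -> (forall t, r <= t <= r' -> A t) ->
  cover_sums (wcost K) A s -> (r' - r) / K r' <= s.
Proof.
  intros Hr Hrr HA [a [b [c [Hab [Hc [Hcov Hsum]]]]]].
  assert (HK' : 0 < K r') by (apply Kpos; lra).
  assert (Hcb : forall n, 0 <= c n /\
            Rmax 0 (Rmin (b n) r' - Rmax (a n) r) / K r' <= c n)
    by (intro n; apply cost_bound; auto).
  assert (Hc0 : forall n, 0 <= c n) by (intro n; apply Hcb).
  assert (Hsl : forall N, sum_f_R0 c N <= s).
  { intros N. apply Rnot_lt_le; intro Hlt.
    destruct (Hsum (sum_f_R0 c N - s)) as [M HM]; [lra|].
    specialize (HM (Nat.max M N) (Nat.le_max_l _ _)). unfold R_dist in HM.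
    apply Rabs_def2 in HM. destruct HM as [HM _].
    pose proof (sum_mono c Hc0 N (Nat.max M N - N)) as Hm.
    replace (N + (Nat.max M N - N))%nat with (Nat.max M N) in Hm by lia. lra. }
  assert (Hpart : forall N, lsum c (seq 0 N) <= s).
  { intro N. pose proof (Hsl N). rewrite sum_f_lsum, lsum_seqS in H.
    specialize (Hc0 N). lra. }
  assert (Key : forall d, 0 < d -> r' - r - d <= K r' * s).
  { intros d Hd.
    set (u := fun n => Rmax (a n) r - d / 2 ^ (S (S n))).
    set (v := fun n => Rmin (b n) r' + d / 2 ^ (S (S n))).
    assert (Hdp : forall n, 0 < d / 2 ^ (S (S n))).
    { intro n. apply Rdiv_lt_0_compat; auto. apply pow_lt; lra. }
    destruct (hb u v r r' Hrr) as [N HN].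
    { intros t Ht. destruct (Hcov t (HA t Ht)) as [n Hn]. exists n.
      specialize (Hdp n). unfold u, v.
      assert (Rmax (a n) r <= t) by (apply Rmax_lub; lra).
      assert (t <= Rmin (b n) r') by (apply Rmin_glb; lra). lra. }
    pose proof (fin_cover u v _ (seq 0 N) r r' eq_refl Hrr) as Hfc.
    assert (Hfc' : r' - r <= lsum (fun n => Rmax 0 (v n - u n)) (seq 0 N)).
    { apply Hfc. intros t Ht. destruct (HN t Ht) as [n [Hn Hnt]].
      exists n; split; auto. apply in_seq. lia. }
    assert (Hle : lsum (fun n => Rmax 0 (v n - u n)) (seq 0 N) <=
                  lsum (fun n => K r' * c n + d * / 2 ^ (S n)) (seq 0 N)).
    { apply lsum_le. intros n _.
      replace (v n - u n) with ((Rmin (b n) r' - Rmax (a n) r) + d * / 2 ^ (S n)).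
      2:{ unfold u, v. assert (2 ^ n <> 0) by (apply pow_nonzero; lra). simpl. field. auto. }
      eapply Rle_trans. apply rmax_shift. left. apply Rmult_lt_0_compat; auto.
      apply Rinv_0_lt_compat, pow_lt; lra.
      destruct (Hcb n) as [_ H2].
      assert (Rmax 0 (Rmin (b n) r' - Rmax (a n) r) <= K r' * c n).
      { apply Rmult_le_reg_r with (/ K r'). apply Rinv_0_lt_compat; auto.
        replace (K r' * c n * / K r') with (c n) by (field; lra). exact H2. }
      lra. }
    rewrite lsum_plus, lsum_scal, lsum_scal, geom in Hle.
    pose proof (Hpart N).
    assert (0 < / 2 ^ N) by (apply Rinv_0_lt_compat, pow_lt; lra).
    assert (K r' * lsum c (seq 0 N) <= K r' * s) by (apply Rmult_le_compat_l; lra).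
    nra. }
  apply Rnot_lt_le; intro Hlt.
  assert (s * K r' < r' - r).
  { replace (r' - r) with ((r' - r) / K r' * K r') by (field; lra).
    apply Rmult_lt_compat_r; lra. }
  pose proof (Key (((r' - r) - K r' * s) / 2) ltac:(lra)). lra.
Qed.

Theorem lemma1 (K : R -> R) (alpha : R) (E : R -> Prop) (eps : R -> R)
  (g h : R -> R)
  (HK : K_admissible K alpha)
  (HE1 : forall x, E x -> 1 <= x)
  (HEm : lebesgue_measurable E)
  (HEf : wint_finite K E)
  (Heps : forall r, 0 < r -> 0 < eps r <= 1)
  (Hdens : K_density_lt K eps E (1 / alpha))
  (Hg : forall x y, 0 < x -> x <= y -> g x <= g y)
  (Hh : forall x y, 0 < x -> x <= y -> h x <= h y)
  (Hgh : forall r, 0 < r -> ~ E r -> g r <= h r) :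
  exists R0, 1 <= R0 /\ forall r, R0 <= r -> g r <= h ((1 + eps r) * r).
Proof.
  destruct HK as [Kpos Hcases].
  assert (Kmono : forall x y, 0 < x -> x <= y -> K x <= K y).
  { destruct Hcases as [[H1 _]|[[H2 _]|[H3 _]]]; intros x y hx hxy.
    - rewrite !H1; lra.
    - rewrite !H2; lra.
    - destruct hxy. left; apply H3; auto. subst; lra. }
  assert (Hal : exists R0, 1 <= R0 /\ 0 < alpha /\
            forall x, R0 <= x -> forall y, x <= y <= 2 * x -> K y <= alpha * K x).
  { destruct Hcases as [[H1 Ha]|[[H2 Ha]|[H3 [_ [_ [_ [Ha [R0 [HR0 HR]]]]]]]]].
    - exists 1. split; [lra|split; [lra|]]. intros x hx y hy.
      rewrite !H1 by lra. subst alpha. lra.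
    - exists 1. split; [lra|split; [lra|]]. intros x hx y hy.
      rewrite !H2 by lra. subst alpha. lra.
    - exists R0. split; [lra|split; [lra|]]. intros x hx y hy.
      eapply Rle_trans. apply Kmono. lra. apply (proj2 hy). apply HR; lra. }
  destruct Hdens as [c0 [Hc0 [R1 HR1]]].
  destruct Hal as [R0 [HR0 [Hapos HKa]]].
  exists (Rmax R0 R1). split.
  { eapply Rle_trans; [exact HR0| apply Rmax_l]. }
  intros r Hr.
  assert (Hr0 : R0 <= r) by (eapply Rle_trans; [apply Rmax_l|exact Hr]).
  assert (Hr1 : R1 <= r) by (eapply Rle_trans; [apply Rmax_r|exact Hr]).
  assert (rpos : 0 < r) by lra.
  destruct (Heps r rpos) as [He1 He2].
  set (r' := (1 + eps r) * r).
  assert (Hrr' : r' - r = eps r * r) by (unfold r'; ring).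
  assert (Hrr2 : r' <= 2 * r) by (unfold r'; nra).
  assert (Hrlt : r < r') by nra.
  apply Rnot_lt_le; intro Hlt.
  set (A := fun x => E x /\ r <= x).
  assert (HEt : forall t, r <= t <= r' -> A t).
  { intros t Ht. split; [|lra]. apply NNPP; intro hn.
    pose proof (Hgh t ltac:(lra) hn). pose proof (Hh t r' ltac:(lra) (proj2 Ht)).
    pose proof (Hg r t rpos (proj1 Ht)). lra. }
  assert (HK' : 0 < K r') by (apply Kpos; lra).
  assert (LB : forall w, outer_le (wcost K) A w -> (r' - r) / K r' <= w).
  { intros w Hw. apply le_epsilon. intros e he.
    destruct (Hw e he) as [s [Hs Hsw]].
    pose proof (cover_lb K Kpos Kmono A r r' s rpos (Rlt_le _ _ Hrlt) HEt Hs). lra. }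
  assert (Hex : exists v, outer_le (wcost K) A v /\
                          forall w, outer_le (wcost K) A w -> v <= w).
  { destruct HEf as [v0 Hv0].
    assert (HA0 : outer_le (wcost K) A v0).
    { intros e he. destruct (Hv0 e he) as [s [[a [b [c [h1 [h2 [h3 h4]]]]]] hs]].
      exists s; split; auto. exists a, b, c. split; [exact h1|split; [exact h2|split; [|exact h4]]].
      intros x [hx _]; auto. }
    set (T := fun z => exists w, outer_le (wcost K) A w /\ z = -w).
    destruct (completeness T) as [m [Hub Hl]].
    { exists (- ((r' - r) / K r')). intros z [w [hw ->]].
      apply Ropp_le_contravar, LB; auto. }
    { exists (-v0), v0; auto. }
    exists (-m). split.
    - intros e he.
      assert (exists w, outer_le (wcost K) A w /\ w < -m + e/2) as [w [hw hwl]].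
      { apply NNPP; intro hn. assert (m <= m - e/2); [|lra].
        apply Hl. intros z [w [hw ->]]. apply Rnot_lt_le; intro.
        apply hn; exists w; split; auto; lra. }
      destruct (hw (e/2)) as [s [hs hs2]]; [lra|].
      exists s; split; auto; lra.
    - intros w hw. assert (-w <= m) by (apply Hub; exists w; auto). lra. }
  pose proof (epsilon_spec (inhabits 0) _ Hex) as [Hw _].
  assert (HW : (r' - r) / K r' <= wint K A) by (apply LB; exact Hw).
  pose proof (HR1 r Hr1) as Hq. unfold density_quot in Hq. fold A in Hq.
  assert (HKr : 0 < K r) by (apply Kpos; lra).
  assert (Hq2 : K r / K r' <= K r / r * wint K A / eps r).
  { apply Rle_trans with (K r / r * ((r' - r) / K r') / eps r).
    - right. rewrite Hrr'. field. lra.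
    - unfold Rdiv. apply Rmult_le_compat_r.
      + left; apply Rinv_0_lt_compat; lra.
      + apply Rmult_le_compat_l. left; apply Rdiv_lt_0_compat; lra. exact HW. }
  assert (Ha2 : K r' <= alpha * K r) by (apply HKa; lra).
  assert (1 / alpha <= K r / K r').
  { unfold Rdiv. rewrite Rmult_1_l.
    apply Rmult_le_reg_l with (alpha * K r'). apply Rmult_lt_0_compat; lra.
    replace (alpha * K r' * / alpha) with (K r') by (field; lra).
    replace (alpha * K r' * (K r * / K r')) with (alpha * K r) by (field; lra).
    exact Ha2. }
  lra.
Qed.
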